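(* Let $Q=(q_n)$ be a basic sequence with $\lim_{N\to\infty}\frac1N\sum_{n=1}^N\frac1{q_n}=0$, and let $x=E_0.E_1E_2\cdots$ (w.r.t. $Q$) be $Q$-distribution normal. If $y=F_0.F_1F_2\cdots$ (w.r.t. $Q$) satisfies $\lim_{n\to\infty}\frac{|E_n-F_n|}{q_n}=0$, then $y$ is $Q$-distribution normal.
   Context: A basic sequence is a sequence $Q=(q_n)_{n\ge1}$ of integers with $q_n\ge2$. The $Q$-Cantor series expansion of a real $x$ is the unique expansion $x=E_0+\sum_{n\ge1}\frac{E_n}{q_1\cdots q_n}$ with $E_0=\lfloor x\rfloor$, $E_n\in\{0,\dots,q_n-1\}$ and $E_n\ne q_n-1$ infinitely often; written $x=E_0.E_1E_2\cdots$ w.r.t. $Q$. Let $T_{Q,n}(x)=\left(\prod_{j=1}^n q_j\right)x \bmod 1$. A real $x$ is $Q$-distribution normal if $(T_{Q,n}(x))_{n\ge0}$ is uniformly distributed modulo $1$. *)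

(* Defs.v *)
From Stdlib Require Import Reals Lra Lia ZArith.
Open Scope R_scope.

(* A basic sequence: q_n >= 2 for all n >= 1 (q 0 is unused). *)
Definition basic_seq (q : nat -> nat) : Prop := forall n, (1 <= n)%nat -> (2 <= q n)%nat.

Fixpoint Qprod (q : nat -> nat) (n : nat) : R :=
  match n with
  | O => 1
  | S m => Qprod q m * INR (q (S m))
  end.

Definition Q_expansion (q : nat -> nat) (x : R) (E : nat -> Z) : Prop :=
  E O = Int_part x /\
  (forall n, (1 <= n)%nat -> (0 <= E n)%Z /\ (E n <= Z.of_nat (q n) - 1)%Z) /\
  (forall N, exists n, (N <= n)%nat /\ (1 <= n)%nat /\ E n <> (Z.of_nat (q n) - 1)%Z) /\
  infinite_sum (fun k => IZR (E (S k)) / Qprod q (S k)) (x - IZR (E O)).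

Definition T_Q (q : nat -> nat) (n : nat) (x : R) : R := frac_part (Qprod q n * x).

Fixpoint count_in (u : nat -> R) (a b : R) (N : nat) : nat :=
  match N with
  | O => O
  | S m => (count_in u a b m +
            if Rle_dec a (frac_part (u m)) then
              if Rlt_dec (frac_part (u m)) b then 1 else 0
            else 0)%nat
  end.

Definition u_d_mod_1 (u : nat -> R) : Prop :=
  forall a b, 0 <= a -> a < b -> b <= 1 ->
    Un_cv (fun N => INR (count_in u a b N) / INR N) (b - a).

Definition Q_distribution_normal (q : nat -> nat) (x : R) : Prop :=
  u_d_mod_1 (fun n => T_Q q n x).

Fixpoint sum_inv_q (q : nat -> nat) (N : nat) : R :=
  match N with
  | O => 0
  | S m => sum_inv_q q m + / INR (q (S m))
  end.

(* Main.v *)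
Require Import Defs.
From Stdlib Require Import Reals Lra Lia ZArith.
Open Scope R_scope.

Lemma archi (r : R) : exists N : nat, r < INR N.
Proof.
  destruct (archimed r) as [H _].
  exists (Z.to_nat (up r)). rewrite INR_IZR_INZ.
  assert (up r <= Z.of_nat (Z.to_nat (up r)))%Z by lia.
  apply IZR_le in H0. lra.
Qed.

Lemma frac_int (z : Z) (t : R) : 0 <= t < 1 -> frac_part (IZR z + t) = t.
Proof.
  intros Ht. unfold frac_part, Int_part.
  rewrite <- (tech_up (IZR z + t) (z + 1)).
  - rewrite Z.add_simpl_r. ring.
  - rewrite plus_IZR. lra.
  - rewrite plus_IZR. lra.
Qed.

Lemma frac_id (t : R) : 0 <= t < 1 -> frac_part t = t.
Proof. intros H. pose proof (frac_int 0 t H) as H0. rewrite Rplus_0_l in H0. exact H0. Qed.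

Lemma approx_bound (t lo hi : R) :
  (forall eps, eps > 0 -> exists r, lo <= r <= hi /\ Rabs (r - t) < eps) -> lo <= t <= hi.
Proof.
  intros H. split.
  - destruct (Rle_or_lt lo t) as [|Hl]; auto.
    destruct (H (lo - t)) as [r [Hr Ha]]; [lra|].
    unfold Rabs in Ha; destruct (Rcase_abs _) in Ha; lra.
  - destruct (Rle_or_lt t hi) as [|Hl]; auto.
    destruct (H (t - hi)) as [r [Hr Ha]]; [lra|].
    unfold Rabs in Ha; destruct (Rcase_abs _) in Ha; lra.
Qed.

Lemma Qprod_pos q n : basic_seq q -> 0 < Qprod q n.
Proof.
  intros Hq. induction n; simpl; [lra|].
  apply Rmult_lt_0_compat; auto.
  assert (2 <= q (S n))%nat by (apply Hq; lia).
  apply le_INR in H. simpl in H. lra.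
Qed.

Lemma q_ge2 q n : basic_seq q -> (1 <= n)%nat -> 2 <= INR (q n).
Proof. intros Hq Hn. apply (le_INR 2). auto. Qed.

Fixpoint cseq (q : nat -> nat) (E : nat -> Z) (n : nat) : Z :=
  match n with
  | O => E O
  | S m => (Z.of_nat (q (S m)) * cseq q E m + E (S m))%Z
  end.

Definition tt q E x n := Qprod q n * x - IZR (cseq q E n).

Lemma tt_rec q E x n :
  tt q E x (S n) = INR (q (S n)) * tt q E x n - IZR (E (S n)).
Proof.
  unfold tt; simpl. rewrite plus_IZR, mult_IZR, <- INR_IZR_INZ. ring.
Qed.

Lemma cdiv q E k : basic_seq q ->
  IZR (cseq q E (S k)) / Qprod q (S k) =
  IZR (cseq q E k) / Qprod q k + IZR (E (S k)) / Qprod q (S k).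
Proof.
  intros Hq. pose proof (Qprod_pos q k Hq).
  pose proof (q_ge2 q (S k) Hq ltac:(lia)).
  simpl. rewrite plus_IZR, mult_IZR, <- INR_IZR_INZ. field. lra.
Qed.

Lemma partial q E m : basic_seq q ->
  sum_f_R0 (fun k => IZR (E (S k)) / Qprod q (S k)) m =
  IZR (cseq q E (S m)) / Qprod q (S m) - IZR (E O).
Proof.
  intros Hq. induction m.
  - simpl sum_f_R0. rewrite cdiv by auto. simpl cseq. simpl Qprod. unfold Rdiv. rewrite Rinv_1. ring.
  - rewrite tech5, IHm. rewrite (cdiv q E (S m)) by auto. ring.
Qed.

Definition B q E n m := Qprod q n * (IZR (cseq q E m) / Qprod q m) - IZR (cseq q E n).

Lemma B_step q E n k : basic_seq q ->
  B q E n (S k) = B q E n k + Qprod q n * (IZR (E (S k)) / Qprod q (S k)).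
Proof. intros Hq. unfold B. rewrite cdiv by auto. ring. Qed.

Lemma Pratio q n k : basic_seq q ->
  Qprod q n / Qprod q k = INR (q (S k)) * (Qprod q n / Qprod q (S k)).
Proof.
  intros Hq. pose proof (Qprod_pos q k Hq).
  pose proof (q_ge2 q (S k) Hq ltac:(lia)). simpl. field. lra.
Qed.

Definition digits_ok q (E : nat -> Z) :=
  forall n, (1 <= n)%nat -> (0 <= E n)%Z /\ (E n <= Z.of_nat (q n) - 1)%Z.

Lemma digR q E n : digits_ok q E -> (1 <= n)%nat ->
  0 <= IZR (E n) /\ IZR (E n) <= INR (q n) - 1.
Proof.
  intros H Hn. destruct (H n Hn) as [H1 H2]. split.
  - apply IZR_le in H1. exact H1.
  - apply IZR_le in H2. rewrite minus_IZR, <- INR_IZR_INZ in H2. exact H2.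
Qed.

Lemma B_bound1 q E n i : basic_seq q -> digits_ok q E ->
  0 <= B q E n (n + i) <= 1 - Qprod q n / Qprod q (n + i).
Proof.
  intros Hq Hd. induction i.
  - rewrite Nat.add_0_r. unfold B. pose proof (Qprod_pos q n Hq).
    replace (Qprod q n * (IZR (cseq q E n) / Qprod q n)) with (IZR (cseq q E n)) by (field; lra).
    replace (Qprod q n / Qprod q n) with 1 by (field; lra). lra.
  - rewrite Nat.add_succ_r, B_step by auto.
    rewrite (Pratio q n (n+i)) in IHi by auto.
    pose proof (digR q E (S (n + i)) Hd ltac:(lia)).
    assert (0 < Qprod q n / Qprod q (S (n + i))).
    { apply Rdiv_lt_0_compat; apply Qprod_pos; auto. }
    replace (Qprod q n * (IZR (E (S (n + i))) / Qprod q (S (n + i))))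
      with (IZR (E (S (n + i))) * (Qprod q n / Qprod q (S (n + i)))) by (unfold Rdiv; ring).
    set (r := Qprod q n / Qprod q (S (n + i))) in *.
    split; nra.
Qed.

Lemma B_bound2 q E n j' i : basic_seq q -> digits_ok q E ->
  (E (S (n + j')) <> Z.of_nat (q (S (n + j'))) - 1)%Z ->
  B q E n (S (n + j') + i) <= 1 - Qprod q n / Qprod q (S (n + j') + i)
                                  - Qprod q n / Qprod q (S (n + j')).
Proof.
  intros Hq Hd Hne. induction i.
  - rewrite Nat.add_0_r, B_step by auto.
    destruct (B_bound1 q E n j' Hq Hd) as [_ H1].
    rewrite (Pratio q n (n+j')) in H1 by auto.
    assert (E (S (n + j')) <= Z.of_nat (q (S (n + j'))) - 2)%Z
      by (destruct (Hd (S (n+j')) ltac:(lia)); lia).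
    apply IZR_le in H. rewrite minus_IZR, <- INR_IZR_INZ in H.
    assert (0 < Qprod q n / Qprod q (S (n + j'))).
    { apply Rdiv_lt_0_compat; apply Qprod_pos; auto. }
    replace (Qprod q n * (IZR (E (S (n + j'))) / Qprod q (S (n + j'))))
      with (IZR (E (S (n + j'))) * (Qprod q n / Qprod q (S (n + j')))) by (unfold Rdiv; ring).
    set (r := Qprod q n / Qprod q (S (n + j'))) in *.
    nra.
  - rewrite Nat.add_succ_r, B_step by auto.
    set (k := (S (n + j') + i)%nat) in *.
    rewrite (Pratio q n k) in IHi by auto.
    pose proof (digR q E (S k) Hd ltac:(lia)).
    assert (0 < Qprod q n / Qprod q (S k)).
    { apply Rdiv_lt_0_compat; apply Qprod_pos; auto. }
    replace (Qprod q n * (IZR (E (S k)) / Qprod q (S k)))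
      with (IZR (E (S k)) * (Qprod q n / Qprod q (S k))) by (unfold Rdiv; ring).
    set (r := Qprod q n / Qprod q (S k)) in *.
    nra.
Qed.

Lemma tt_bounds q E x n : basic_seq q -> Q_expansion q x E ->
  0 <= tt q E x n < 1.
Proof.
  intros Hq [H0 [Hd [Hinf Hsum]]].
  destruct (Hinf (S n)) as [j [Hj1 [Hj2 Hj3]]].
  assert (Hj : exists j', j = S (n + j')) by (exists (j - S n)%nat; lia).
  destruct Hj as [j' ->].
  assert (Hpos : 0 < Qprod q n / Qprod q (S (n + j'))).
  { apply Rdiv_lt_0_compat; apply Qprod_pos; auto. }
  assert (0 <= tt q E x n <= 1 - Qprod q n / Qprod q (S (n + j'))).
  { apply approx_bound. intros eps Heps.
    pose proof (Qprod_pos q n Hq) as Pn.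
    destruct (Hsum (eps / Qprod q n)) as [N HN].
    { apply Rdiv_lt_0_compat; auto. }
    set (m := (N + S (n + j'))%nat).
    exists (B q E n (S m)). split.
    - split.
      + replace (S m) with (n + (S (S N) + j'))%nat by (unfold m; lia).
        apply (B_bound1 q E n _ Hq Hd).
      + replace (S m) with (S (n + j') + S N)%nat by (unfold m; lia).
        pose proof (B_bound2 q E n j' (S N) Hq Hd Hj3).
        assert (0 < Qprod q n / Qprod q (S (n + j') + S N)).
        { apply Rdiv_lt_0_compat; apply Qprod_pos; auto. }
        lra.
    - specialize (HN m ltac:(unfold m; lia)).
      unfold R_dist in HN. rewrite partial in HN by auto.
      unfold B, tt.
      replace (Qprod q n * (IZR (cseq q E (S m)) / Qprod q (S m)) - IZR (cseq q E n) -
               (Qprod q n * x - IZR (cseq q E n)))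
        with (Qprod q n * (IZR (cseq q E (S m)) / Qprod q (S m) - IZR (E 0%nat) - (x - IZR (E 0%nat))))
        by ring.
      rewrite Rabs_mult, (Rabs_right (Qprod q n)) by lra.
      apply Rmult_lt_compat_l with (r := Qprod q n) in HN; auto.
      replace (Qprod q n * (eps / Qprod q n)) with eps in HN by (field; lra).
      exact HN. }
  lra.
Qed.

Lemma T_Q_tt q E x n : basic_seq q -> Q_expansion q x E ->
  T_Q q n x = tt q E x n.
Proof.
  intros Hq He. unfold T_Q.
  replace (Qprod q n * x) with (IZR (cseq q E n) + tt q E x n) by (unfold tt; ring).
  apply frac_int. apply tt_bounds; auto.
Qed.

Lemma tt_diff q E F x y n : basic_seq q -> Q_expansion q x E -> Q_expansion q y F ->
  Rabs (tt q E x n - tt q F y n) <= (Rabs (IZR (E (S n) - F (S n))) + 1) / INR (q (S n)).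
Proof.
  intros Hq Hx Hy.
  pose proof (tt_rec q E x n) as R1. pose proof (tt_rec q F y n) as R2.
  pose proof (tt_bounds q E x (S n) Hq Hx). pose proof (tt_bounds q F y (S n) Hq Hy).
  pose proof (q_ge2 q (S n) Hq ltac:(lia)).
  set (Q := INR (q (S n))) in *.
  assert (tt q E x n - tt q F y n =
     ((tt q E x (S n) - tt q F y (S n)) + IZR (E (S n) - F (S n))) / Q).
  { rewrite R1, R2, minus_IZR. field. lra. }
  rewrite H2. unfold Rdiv. rewrite Rabs_mult, Rabs_inv, (Rabs_right Q) by lra.
  apply Rmult_le_compat_r. { left. apply Rinv_0_lt_compat. lra. }
  eapply Rle_trans; [apply Rabs_triang|].
  assert (Rabs (tt q E x (S n) - tt q F y (S n)) <= 1).
  { unfold Rabs; destruct Rcase_abs; lra. }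
  lra.
Qed.

Fixpoint Dsum (D : nat -> R) (N : nat) : R :=
  match N with O => 0 | S m => Dsum D m + D m end.

Definition ind (a b w : R) : nat :=
  if Rle_dec a w then if Rlt_dec w b then 1%nat else 0%nat else 0%nat.

Lemma count_S u a b m :
  count_in u a b (S m) = (count_in u a b m + ind a b (frac_part (u m)))%nat.
Proof. reflexivity. Qed.

Lemma ratio_facts (d δ : R) : δ > 0 -> 0 <= d -> 0 <= d / δ /\ (δ <= d -> 1 <= d / δ).
Proof.
  intros Hd Hd0. split.
  - unfold Rdiv. apply Rmult_le_pos; [lra|left; apply Rinv_0_lt_compat; lra].
  - intros H. apply (Rmult_le_reg_r δ); auto. unfold Rdiv. rewrite Rmult_assoc, Rinv_l; lra.
Qed.

Lemma ind_upper a b uu vv d δ : δ > 0 -> 0 <= uu < 1 -> Rabs (uu - vv) <= d ->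
  INR (ind a b vv) <= INR (ind (Rmax 0 (a - δ)) (Rmin 1 (b + δ)) uu) + d / δ.
Proof.
  intros Hδ Hu Hd.
  assert (0 <= d) by (eapply Rle_trans; [apply Rabs_pos|eauto]).
  destruct (ratio_facts d δ Hδ H) as [R1 R2].
  unfold Rabs in Hd; destruct Rcase_abs in Hd;
  unfold ind, Rmax, Rmin;
  repeat (destruct Rle_dec); repeat (destruct Rlt_dec); simpl; try lra;
  assert (δ <= d) by lra; specialize (R2 H0); lra.
Qed.

Lemma ind_lower a b uu vv d δ : δ > 0 -> Rabs (uu - vv) <= d ->
  INR (ind (a + δ) (b - δ) uu) <= INR (ind a b vv) + d / δ.
Proof.
  intros Hδ Hd.
  assert (0 <= d) by (eapply Rle_trans; [apply Rabs_pos|eauto]).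
  destruct (ratio_facts d δ Hδ H) as [R1 R2].
  unfold Rabs in Hd; destruct Rcase_abs in Hd;
  unfold ind;
  repeat (destruct Rle_dec); repeat (destruct Rlt_dec); simpl; try lra;
  assert (δ <= d) by lra; specialize (R2 H0); lra.
Qed.

Lemma Dsum_div D δ N : Dsum D (S N) / δ = Dsum D N / δ + D N / δ.
Proof. simpl. unfold Rdiv. ring. Qed.

Lemma count_upper u v D a b δ N : δ > 0 ->
  (forall n, 0 <= u n < 1) -> (forall n, 0 <= v n < 1) ->
  (forall n, Rabs (u n - v n) <= D n) ->
  INR (count_in v a b N) <= INR (count_in u (Rmax 0 (a - δ)) (Rmin 1 (b + δ)) N) + Dsum D N / δ.
Proof.
  intros Hδ Hu Hv HD. induction N.
  - simpl. unfold Rdiv. lra.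
  - rewrite !count_S, !plus_INR, Dsum_div, !frac_id by auto.
    pose proof (ind_upper a b (u N) (v N) (D N) δ Hδ (Hu N) (HD N)). lra.
Qed.

Lemma count_lower u v D a b δ N : δ > 0 ->
  (forall n, 0 <= u n < 1) -> (forall n, 0 <= v n < 1) ->
  (forall n, Rabs (u n - v n) <= D n) ->
  INR (count_in u (a + δ) (b - δ) N) <= INR (count_in v a b N) + Dsum D N / δ.
Proof.
  intros Hδ Hu Hv HD. induction N.
  - simpl. unfold Rdiv. lra.
  - rewrite !count_S, !plus_INR, Dsum_div, !frac_id by auto.
    pose proof (ind_lower a b (u N) (v N) (D N) δ Hδ (HD N)). lra.
Qed.

Lemma scale_ineq (X Y S c δ : R) : c > 0 -> δ > 0 ->
  X <= Y + S / δ -> S <= δ * δ * c -> X / c <= Y / c + δ.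
Proof.
  intros Hc Hδ H1 H2.
  assert (S / δ <= δ * c).
  { apply (Rmult_le_reg_r δ); auto. unfold Rdiv. rewrite Rmult_assoc, Rinv_l by lra. lra. }
  apply (Rmult_le_reg_r c); auto.
  unfold Rdiv. rewrite Rmult_plus_distr_r, !Rmult_assoc, Rinv_l by lra. lra.
Qed.

Lemma ud_transfer (u v D : nat -> R) :
  (forall n, 0 <= u n < 1) -> (forall n, 0 <= v n < 1) ->
  (forall n, Rabs (u n - v n) <= D n) ->
  (forall eps, eps > 0 -> exists N0, forall N, (N >= N0)%nat -> Dsum D N <= eps * INR N) ->
  u_d_mod_1 u -> u_d_mod_1 v.
Proof.
  intros Hu Hv HD HS Hud a b Ha Hab Hb eps Heps.
  set (δ := eps / 8).
  assert (Hδ : δ > 0) by (unfold δ; lra).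
  set (a' := Rmax 0 (a - δ)). set (b' := Rmin 1 (b + δ)).
  assert (Hab' : 0 <= a' /\ a' < b' /\ b' <= 1 /\ b' - a' <= b - a + 2 * δ).
  { unfold a', b', Rmax, Rmin. repeat destruct Rle_dec; lra. }
  destruct Hab' as [H1 [H2 [H3 H4]]].
  destruct (Hud a' b' H1 H2 H3 δ Hδ) as [N1 HN1].
  destruct (HS (δ * δ)) as [N2 HN2]. { apply Rmult_lt_0_compat; auto. }
  assert (HL : exists N3, forall n, (n >= N3)%nat -> (n >= 1)%nat ->
            b - a - 4 * δ < INR (count_in v a b n) / INR n).
  { destruct (Rlt_dec (a + δ) (b - δ)) as [Hlt|Hnlt].
    - destruct (Hud (a + δ) (b - δ) ltac:(lra) Hlt ltac:(lra) δ Hδ) as [N3 HN3].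
      exists (Nat.max N3 N2). intros n Hn Hn1.
      assert (Hc : INR n > 0) by (apply lt_0_INR; lia).
      specialize (HN3 n ltac:(lia)). specialize (HN2 n ltac:(lia)).
      pose proof (count_lower u v D a b δ n Hδ Hu Hv HD) as CL.
      pose proof (scale_ineq _ _ _ _ _ Hc Hδ CL HN2).
      unfold R_dist in HN3. unfold Rabs in HN3; destruct Rcase_abs in HN3; lra.
    - exists 1%nat. intros n Hn Hn1.
      assert (Hc : INR n > 0) by (apply lt_0_INR; lia).
      assert (0 <= INR (count_in v a b n) / INR n).
      { unfold Rdiv. apply Rmult_le_pos; [apply pos_INR|left; apply Rinv_0_lt_compat; lra]. }
      lra. }
  destruct HL as [N3 HN3].
  exists (Nat.max 1 (Nat.max N1 (Nat.max N2 N3))). intros n Hn.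
  assert (Hc : INR n > 0) by (apply lt_0_INR; lia).
  specialize (HN3 n ltac:(lia) ltac:(lia)).
  specialize (HN1 n ltac:(lia)). specialize (HN2 n ltac:(lia)).
  pose proof (count_upper u v D a b δ n Hδ Hu Hv HD) as CU.
  pose proof (scale_ineq _ _ _ _ _ Hc Hδ CU HN2).
  fold a' b' in H.
  unfold R_dist in *. unfold Rabs in *.
  destruct Rcase_abs in HN1; destruct Rcase_abs; unfold δ in *; lra.
Qed.

Lemma Dsum_mono (c : nat -> R) N K : (forall n, 0 <= c n) -> (N <= K)%nat -> Dsum c N <= Dsum c K.
Proof.
  intros Hc HNK. induction HNK; [lra|]. simpl. specialize (Hc m). lra.
Qed.

Lemma Dsum_tail (c : nat -> R) K e : (forall n, (n >= K)%nat -> c n <= e) ->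
  forall i, Dsum c (K + i) <= Dsum c K + e * INR i.
Proof.
  intros Hc i. induction i.
  - rewrite Nat.add_0_r. simpl. lra.
  - rewrite Nat.add_succ_r. simpl Dsum. rewrite S_INR.
    specialize (Hc (K + i)%nat ltac:(lia)). lra.
Qed.

Lemma Dsum_bound (c : nat -> R) K e : (forall n, 0 <= c n) -> 0 <= e ->
  (forall n, (n >= K)%nat -> c n <= e) ->
  forall N, Dsum c N <= Dsum c K + e * INR N.
Proof.
  intros Hc He HK N. destruct (Nat.le_gt_cases N K).
  - pose proof (Dsum_mono c N K Hc H). pose proof (pos_INR N). nra.
  - replace N with (K + (N - K))%nat by lia.
    pose proof (Dsum_tail c K e HK (N - K)).
    assert (INR (N - K) <= INR (K + (N - K))) by (apply le_INR; lia). nra.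
Qed.

Lemma Dsum_nonneg (c : nat -> R) N : (forall n, 0 <= c n) -> 0 <= Dsum c N.
Proof. intros Hc. induction N; simpl; [lra|]. specialize (Hc N). lra. Qed.

Lemma Dsum_split q (c : nat -> R) N : basic_seq q ->
  Dsum (fun n => c (S n) + / INR (q (S n))) N = Dsum (fun n => c (S n)) N + sum_inv_q q N.
Proof. intros Hq. induction N; simpl; [lra|]. rewrite IHN. ring. Qed.

Theorem corollary3p3 (q : nat -> nat) (x y : R) (E F : nat -> Z) :
  basic_seq q ->
  Un_cv (fun N => sum_inv_q q N / INR N) 0 ->
  Q_expansion q x E ->
  Q_distribution_normal q x ->
  Q_expansion q y F ->
  Un_cv (fun n => Rabs (IZR (E n - F n)) / INR (q n)) 0 ->
  Q_distribution_normal q y.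
Proof.
  intros Hq Hinv Hx Hnx Hy Hc.
  set (c := fun n => Rabs (IZR (E n - F n)) / INR (q n)).
  assert (Hc0 : forall n, (1 <= n)%nat -> 0 <= c n).
  { intros n Hn. unfold c, Rdiv. apply Rmult_le_pos; [apply Rabs_pos|].
    left. apply Rinv_0_lt_compat. pose proof (q_ge2 q n Hq Hn). lra. }
  apply (ud_transfer (fun n => T_Q q n x) (fun n => T_Q q n y)
           (fun n => c (S n) + / INR (q (S n)))); auto.
  - intros n. rewrite (T_Q_tt q E x n Hq Hx). apply tt_bounds; auto.
  - intros n. rewrite (T_Q_tt q F y n Hq Hy). apply tt_bounds; auto.
  - intros n. rewrite (T_Q_tt q E x n Hq Hx), (T_Q_tt q F y n Hq Hy).
    eapply Rle_trans; [apply tt_diff; auto|].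
    unfold c. pose proof (q_ge2 q (S n) Hq ltac:(lia)). right. field. apply Rgt_not_eq. apply Rlt_le_trans with 2; [lra|]. exact H.
  - intros eps Heps.
    destruct (Hc (eps / 4)) as [K HK]; [lra|].
    set (c' := fun n => c (S n)).
    assert (Hc'0 : forall n, 0 <= c' n) by (intros; apply Hc0; lia).
    assert (HK' : forall n, (n >= K)%nat -> c' n <= eps / 4).
    { intros n Hn. specialize (HK (S n) ltac:(lia)). unfold R_dist in HK.
      unfold c'. fold c in HK. rewrite Rminus_0_r in HK.
      pose proof (Rle_abs (c (S n))). unfold c in *. lra. }
    pose proof (Dsum_bound c' K (eps/4) Hc'0 ltac:(lra) HK') as DB.
    destruct (archi (Dsum c' K / (eps / 4))) as [N1 HN1].
    destruct (Hinv (eps / 2)) as [N2 HN2]; [lra|].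
    exists (Nat.max 1 (Nat.max N1 N2)). intros N HN.
    rewrite Dsum_split by auto. fold c'.
    assert (HcN : INR N > 0) by (apply lt_0_INR; lia).
    specialize (HN2 N ltac:(lia)). unfold R_dist in HN2. rewrite Rminus_0_r in HN2.
    pose proof (Rle_abs (sum_inv_q q N / INR N)).
    assert (sum_inv_q q N <= eps / 2 * INR N).
    { replace (sum_inv_q q N) with (sum_inv_q q N / INR N * INR N) by (field; lra). nra. }
    assert (Dsum c' K <= eps / 4 * INR N).
    { assert (INR N1 <= INR N) by (apply le_INR; lia).
      assert (Dsum c' K / (eps / 4) < INR N) by lra.
      replace (Dsum c' K) with (Dsum c' K / (eps / 4) * (eps / 4)) by (field; lra). nra. }
    specialize (DB N). lra.
Qed.
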